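(* Every connected finite graph $G=(V,E)$ (parallel edges and self-loops allowed) has the weighted strict Gauss–Lucas property: for every $0<\beta<1$, every legal weight assignment $w$ for $G$, and every collection of complex activities $(z_v)_{v\in V}$ with $|z_v|\ge 1$ for all $v\in V$, we have $\mathcal{D}_G Z_w(G)\neq 0$. Consequently $G$ also has the strict Gauss–Lucas property: under the same conditions on $\beta$ and $(z_v)$, $\mathcal{D}_G Z_I(G,\beta,(z_v)_{v\in V})\ne 0$.
   Context: Graphs may have parallel edges and self-loops; the degree $\deg(v)$ counts edges with multiplicity, a self-loop counting twice, and $d(\sigma)$ counts (with multiplicity) the edges $\{u,v\}$ whose endpoints receive different spins ($\sigma(u)\neq\sigma(v)$). For $\sigma\in\{+,-\}^V$, $0<\beta\le1$ and complex activities $(z_v)_{v\in V}$, the multivariate Ising partition function is $Z_I(G,\beta,(z_v))=\sum_{\sigma\in\{+,-\}^V}\beta^{d(\sigma)}\prod_{v:\sigma(v)=+}z_v$. A weight assignment $w:V\to\mathbb{Z}_{>0}$ is legal if $w(v)\ge\deg(v)$ for all $v$. The weighted partition function is $Z_w(G)=\sum_{\sigma\in\{+,-\}^V}\beta^{d(\sigma)}\prod_{v:\sigma(v)=+}z_v^{w(v)}$, a polynomial in the variables $(z_v)$. The operator $\mathcal{D}_G=\sum_{v\in V}z_v\frac{\partial}{\partial z_v}$. $G$ has the strict Gauss–Lucas property (SGLP) if $\mathcal{D}_GZ_I(G,\beta,(z_v))\neq0$ whenever $0<\beta<1$ and $|z_v|\ge1$ for all $v$; it has the weighted strict Gauss–Lucas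 property (WSGLP) if $\mathcal{D}_GZ_w(G)\ne0$ for every legal $w$ under the same conditions. *)

(* Defs.v *)
From HB Require Import structures.
From mathcomp Require Import all_boot all_order all_algebra.
Set Implicit Arguments. Unset Strict Implicit. Unset Printing Implicit Defensive.
Import Order.TTheory GRing.Theory Num.Theory.
Local Open Scope ring_scope.

(* A finite multigraph (parallel edges and self-loops allowed):
   vertex type V, edge type E, and each edge e has endpoints ends e = (u, v).
   A self-loop is an edge with (ends e).1 = (ends e).2. *)

(* degree with multiplicity, a self-loop counting twice *)
Definition deg (V E : finType) (ends : E -> V * V) (v : V) : nat :=
  (\sum_(e : E) (((ends e).1 == v) + ((ends e).2 == v)))%N.

Definition adj (V E : finType) (ends : E -> V * V) : rel V :=
  fun u v => [exists e : E, (ends e == (u, v)) || (ends e == (v, u))].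

Definition connected_graph (V E : finType) (ends : E -> V * V) : Prop :=
  (0 < #|V|)%N /\ forall u v : V, connect (adj ends) u v.

(* spins: sigma v = true means "+", false means "-".
   d(sigma): number of edges (with multiplicity) with differently-spinned ends *)
Definition dcut (V E : finType) (ends : E -> V * V) (sigma : {ffun V -> bool}) : nat :=
  #|[set e : E | sigma (ends e).1 != sigma (ends e).2]|.

Definition legal (V E : finType) (ends : E -> V * V) (w : V -> nat) : Prop :=
  forall v, (0 < w v)%N /\ (deg ends v <= w v)%N.

(* Weighted partition function Z_w evaluated at (beta, z):
   sum_sigma beta^{d(sigma)} prod_{v : sigma v = +} z_v^{w v}.
   The multivariate Ising partition function Z_I is the case w = 1. *)
Definition Zw (C : numClosedFieldType) (V E : finType) (ends : E -> V * V)
  (w : V -> nat) (beta : C) (z : V -> C) : C :=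
  \sum_(sigma : {ffun V -> bool})
     beta ^+ dcut ends sigma * \prod_(v | sigma v) z v ^+ w v.

(* The Euler operator D_G = sum_v z_v d/dz_v applied to the polynomial Z_w
   (in the variables z_v) and then evaluated at z.  On a monomial
   c * prod_v z_v^{k_v} the operator D_G acts as multiplication by sum_v k_v;
   Z_w is the sum over sigma of the monomials beta^{d sigma} prod_{sigma v} z_v^{w v},
   so by linearity D_G Z_w is the following sum. *)
Definition DZw (C : numClosedFieldType) (V E : finType) (ends : E -> V * V)
  (w : V -> nat) (beta : C) (z : V -> C) : C :=
  \sum_(sigma : {ffun V -> bool})
     beta ^+ dcut ends sigma * (\sum_(v | sigma v) w v)%N%:R
       * \prod_(v | sigma v) z v ^+ w v.

Definition WSGLP (C : numClosedFieldType) (V E : finType) (ends : E -> V * V) : Prop :=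
  forall (w : V -> nat) (beta : C) (z : V -> C),
    legal ends w -> 0 < beta -> beta < 1 -> (forall v, 1 <= `|z v|) ->
    DZw ends w beta z != 0.

Definition SGLP (C : numClosedFieldType) (V E : finType) (ends : E -> V * V) : Prop :=
  forall (beta : C) (z : V -> C),
    0 < beta -> beta < 1 -> (forall v, 1 <= `|z v|) ->
    DZw ends (fun _ => 1%N) beta z != 0.

(* Main.v *)
Require Import Defs.
From HB Require Import structures.
From mathcomp Require Import all_boot all_order all_algebra.
From mathcomp Require Import ring.
Import Order.TTheory GRing.Theory Num.Theory.
Local Open Scope ring_scope.

Section TwoVar.
Variable C : numClosedFieldType.
Implicit Types (A B P Q s t x : C).

Lemma nmE (z : C) : `|z| ^+ 2 = z * z^*.
Proof. exact: normCK. Qed.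

Lemma le_sq (a b : C) : `|a| <= `|b| -> `|a| ^+ 2 <= `|b| ^+ 2.
Proof. by move=> h; apply: lerXn2r => //; rewrite qualifE /=. Qed.

Lemma lt_sq (a b : C) : `|a| < `|b| -> `|a| ^+ 2 < `|b| ^+ 2.
Proof. by move=> h; rewrite ltrXn2r. Qed.

Lemma sq_le (a b : C) : `|a| ^+ 2 <= `|b| ^+ 2 -> `|a| <= `|b|.
Proof.
move=> h; rewrite real_leNgt ?normr_real //; apply/negP => /lt_sq.
by rewrite real_ltNge ?h // rpredX ?normr_real.
Qed.

Lemma sq_lt (a b : C) : `|a| ^+ 2 < `|b| ^+ 2 -> `|a| < `|b|.
Proof.
move=> h; rewrite real_ltNge ?normr_real //; apply/negP => /le_sq.
by rewrite real_leNgt ?h // rpredX ?normr_real.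
Qed.

Lemma lin_closed P Q : (forall t, `|t| <= 1 -> P + Q * t != 0) -> `|Q| < `|P|.
Proof.
move=> h; have P0 : P != 0 by have := h 0; rewrite normr0 ler01 mulr0 addr0; apply.
have [->|Q0] := eqVneq Q 0; first by rewrite normr0 normr_gt0.
rewrite real_ltNge ?normr_real //; apply/negP => hle.
suff : `|- P / Q| <= 1 by move/h; rewrite mulrCA divff // mulr1 subrr eqxx.
by rewrite normf_div normrN ler_pdivrMr ?normr_gt0 // mul1r.
Qed.

Lemma lin_open P Q : (forall t, `|t| < 1 -> P + Q * t != 0) -> `|Q| <= `|P| /\ P != 0.
Proof.
move=> h; have P0 : P != 0 by have := h 0; rewrite normr0 ltr01 mulr0 addr0; apply.
split=> //; have [->|Q0] := eqVneq Q 0; first by rewrite normr0 normr_ge0.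
rewrite real_leNgt ?normr_real //; apply/negP => hle.
suff : `|- P / Q| < 1 by move/h; rewrite mulrCA divff // mulr1 subrr eqxx.
by rewrite normf_div normrN ltr_pdivrMr ?normr_gt0 // mul1r.
Qed.

Lemma lin_eq0 P Q t : P + Q * t = 0 -> `|P| = `|Q| * `|t|.
Proof. by move=> h; rewrite -normrM -normrN; congr `|_|; apply/eqP; rewrite eq_sym -subr_eq0 opprK addrC h. Qed.

Lemma lin_closed_nz P Q t : `|Q| < `|P| -> `|t| <= 1 -> P + Q * t != 0.
Proof.
move=> hQ ht; apply/negP => /eqP /lin_eq0 e.
have : `|Q| * `|t| <= `|Q| by apply: ler_piMr.
by rewrite -e real_leNgt ?normr_real // hQ.
Qed.

Lemma lin_open_nz P Q t : `|Q| <= `|P| -> P != 0 -> `|t| < 1 -> P + Q * t != 0.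
Proof.
move=> hQ P0 ht; apply/negP => /eqP /lin_eq0 e.
have [Q0|Q0] := eqVneq Q 0; first by move: e; rewrite Q0 normr0 mul0r => /eqP; rewrite normr_eq0 (negPf P0).
have : `|Q| * `|t| < `|Q| by rewrite gtr_pMr ?normr_gt0.
by rewrite -e real_ltNge ?normr_real // hQ.
Qed.

Lemma sq_ge0 (z : C) : 0 <= `|z| ^+ 2.
Proof. by rewrite exprn_ge0. Qed.

Lemma key_ineq A B Cc D s (b : C) : 0 <= b -> b <= 1 -> `|s| <= 1 ->
  `|Cc + D| <= `|A + B| -> `|Cc - D| <= `|A - B| ->
  `|B + D| <= `|A + Cc| -> `|B - D| <= `|A - Cc| ->
  b * (`|A + B * s| ^+ 2 - `|Cc + D * s| ^+ 2) <=
  `|A + b * B * s| ^+ 2 - `|b * Cc + D * s| ^+ 2.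
Proof.
move=> b0 b1 s1 h1 h2 h3 h4.
have br : b^* = b by apply: conj_Creal; apply: ger0_real.
have e : 4 * ((`|A + b * B * s| ^+ 2 - `|b * Cc + D * s| ^+ 2) -
              b * (`|A + B * s| ^+ 2 - `|Cc + D * s| ^+ 2)) =
  (1 - b) * (4 * ((b * `|B| ^+ 2 + `|D| ^+ 2) * (1 - `|s| ^+ 2)) +
     (1 + b) * ((`|A + Cc| ^+ 2 - `|B + D| ^+ 2) + (`|A - Cc| ^+ 2 - `|B - D| ^+ 2)) +
     (1 - b) * ((`|A + B| ^+ 2 - `|Cc + D| ^+ 2) + (`|A - B| ^+ 2 - `|Cc - D| ^+ 2))).
  rewrite !normCK !(rmorphD, rmorphN, rmorphM, rmorph1).
  rewrite -[Num.Num_conj__canonical__GRing_RMorphism C b]/(b^*) br; ring.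
rewrite -subr_ge0 -(pmulr_rge0 _ (_ : 0 < 4)) ?e; last by rewrite ltr0n.
apply: mulr_ge0; first by rewrite subr_ge0.
have hs : 0 <= 1 - `|s| ^+ 2 by rewrite subr_ge0 expr_le1.
have b1' : 0 <= 1 - b by rewrite subr_ge0.
apply: addr_ge0; first apply: addr_ge0.
- by rewrite mulr_ge0 ?ler0n // mulr_ge0 // addr_ge0 ?mulr_ge0 ?sq_ge0.
- apply: mulr_ge0; first by rewrite addr_ge0 ?ler01.
  by rewrite addr_ge0 // subr_ge0 le_sq.
- apply: mulr_ge0 => //.
  by rewrite addr_ge0 // subr_ge0 le_sq.
Qed.

Lemma real_conj {b : C} : 0 <= b -> b^* = b.
Proof. by move=> b0; apply: conj_Creal; apply: ger0_real. Qed.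

Lemma bt_id (b t : C) : 0 <= b ->
  `|1 + b * t| ^+ 2 - `|b + t| ^+ 2 = (1 - b ^+ 2) * (1 - `|t| ^+ 2).
Proof.
move=> b0; have br := real_conj (b := b) b0.
rewrite !normCK !(rmorphD, rmorphN, rmorphM, rmorph1).
rewrite -[Num.Num_conj__canonical__GRing_RMorphism C b]/(b^*) br; ring.
Qed.

Lemma bt_le (b t : C) : 0 <= b -> b <= 1 -> `|t| <= 1 -> `|b + t| <= `|1 + b * t|.
Proof.
move=> b0 b1 t1; apply: sq_le; rewrite -subr_ge0 bt_id //.
by rewrite mulr_ge0 // subr_ge0 expr_le1.
Qed.

Lemma bt_lt (b t : C) : 0 <= b -> b < 1 -> `|t| < 1 -> `|b + t| < `|1 + b * t|.
Proof.
move=> b0 b1 t1; apply: sq_lt; rewrite -subr_gt0 bt_id //.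
by rewrite mulr_gt0 // subr_gt0 expr_lt1 // normr_ge0.
Qed.

Lemma bt_nz (b t : C) : 0 <= b -> b < 1 -> `|t| <= 1 -> 1 + b * t != 0.
Proof.
move=> b0 b1 t1; apply: lin_closed_nz => //.
by rewrite normr1 ger0_norm.
Qed.

Lemma LP1 A B (b s t : C) : `|B| < `|A| -> 0 <= b -> b < 1 -> `|s| <= 1 -> `|t| <= 1 ->
  A + b * B * s + b * A * t + B * s * t != 0.
Proof.
move=> hAB b0 b1 s1 t1.
have -> : A + b * B * s + b * A * t + B * s * t = A * (1 + b * t) + B * (b + t) * s by ring.
apply: lin_closed_nz => //; rewrite !normrM.
apply: (le_lt_trans (y := `|B| * `|1 + b * t|)).
  by apply: ler_wpM2l => //; apply: bt_le => //; apply: ltW.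
by rewrite ltr_pM2r // normr_gt0 bt_nz.
Qed.

Lemma LP2 A B (b s t : C) : A != 0 -> `|B| <= `|A| -> 0 <= b -> b < 1 -> `|s| <= 1 -> `|t| <= 1 ->
  (`|s| < 1) || (`|t| < 1) -> A + b * B * s + b * A * t + B * s * t != 0.
Proof.
move=> A0 hAB b0 b1 s1 t1 hst.
have -> : A + b * B * s + b * A * t + B * s * t = A * (1 + b * t) + B * (b + t) * s by ring.
have nz : 1 + b * t != 0 by apply: bt_nz.
case/orP: hst => [hs|ht].
  apply: lin_open_nz => //; last by rewrite mulf_neq0.
  by rewrite !normrM; apply: ler_pM => //; exact: bt_le b0 (ltW b1) t1.
apply: lin_closed_nz => //; rewrite !normrM.
apply: (le_lt_trans (y := `|A| * `|b + t|)); first by apply: ler_wpM2r.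
by rewrite ltr_pM2l ?normr_gt0 // bt_lt.
Qed.

Definition H4 A B Cc D (s t : C) := A + B * s + Cc * t + D * s * t.

Lemma L1 A B Cc D (b : C) : 0 < b -> b < 1 ->
  (forall s t, `|s| <= 1 -> `|t| <= 1 -> H4 A B Cc D s t != 0) ->
  forall s t, `|s| <= 1 -> `|t| <= 1 -> H4 A (b * B) (b * Cc) D s t != 0.
Proof.
move=> b0 b1 h.
have fs : forall s, `|s| <= 1 -> `|Cc + D * s| < `|A + B * s|.
  move=> s s1; apply: lin_closed => t t1.
  by have := h s t s1 t1; rewrite /H4; congr (_ != _); ring.
have ft : forall t, `|t| <= 1 -> `|B + D * t| < `|A + Cc * t|.
  move=> t t1; apply: lin_closed => s s1.
  by have := h s t s1 t1; rewrite /H4; congr (_ != _); ring.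
have n1 : `|(1 : C)| <= 1 by rewrite normr1.
have nm1 : `|(-1 : C)| <= 1 by rewrite normrN normr1.
have h1 := ltW (fs 1 n1); have h2 := ltW (fs (-1) nm1).
have h3 := ltW (ft 1 n1); have h4 := ltW (ft (-1) nm1).
rewrite !mulr1 !mulrN1 in h1 h2 h3 h4.
move=> s t s1 t1.
have K := key_ineq A B Cc D s b (ltW b0) (ltW b1) s1 h1 h2 h3 h4.
have Qb : 0 < `|A + b * B * s| ^+ 2 - `|b * Cc + D * s| ^+ 2.
  apply: lt_le_trans K; apply: mulr_gt0 => //.
  by rewrite subr_gt0 lt_sq // fs.
have : `|b * Cc + D * s| < `|A + b * B * s| by apply: sq_lt; rewrite -subr_gt0.
move/lin_closed_nz => /(_ t t1); rewrite /H4; congr (_ != _); ring.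
Qed.

Lemma L4 A B Cc D (b : C) : 0 < b -> b < 1 ->
  (forall s t, `|s| <= 1 -> `|t| <= 1 -> (`|s| < 1) || (`|t| < 1) -> H4 A B Cc D s t != 0) ->
  forall s t, `|s| <= 1 -> `|t| <= 1 -> (`|s| < 1) || (`|t| < 1) ->
    H4 A (b * B) (b * Cc) D s t != 0.
Proof.
move=> b0 b1 h.
have fs : forall s, `|s| <= 1 -> `|Cc + D * s| <= `|A + B * s| /\ A + B * s != 0.
  move=> s s1; apply: lin_open => t t1.
  have := h s t s1 (ltW t1); rewrite t1 orbT /H4 => /(_ isT).
  by congr (_ != _); ring.
have fs' : forall s, `|s| < 1 -> `|Cc + D * s| < `|A + B * s|.
  move=> s s1; apply: lin_closed => t t1.
  have := h s t (ltW s1) t1; rewrite s1 /H4 => /(_ isT).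
  by congr (_ != _); ring.
have ft : forall t, `|t| <= 1 -> `|B + D * t| <= `|A + Cc * t| /\ A + Cc * t != 0.
  move=> t t1; apply: lin_open => s s1.
  have := h s t (ltW s1) t1; rewrite s1 /H4 => /(_ isT).
  by congr (_ != _); ring.
have hAB : `|B| < `|A|.
  apply: lin_closed => s s1.
  have := h s 0 s1; rewrite normr0 ler01 ltr01 orbT /H4 => /(_ isT isT).
  by congr (_ != _); ring.
have n1 : `|(1 : C)| <= 1 by rewrite normr1.
have nm1 : `|(-1 : C)| <= 1 by rewrite normrN normr1.
have h1 := (fs 1 n1).1; have h2 := (fs (-1) nm1).1.
have h3 := (ft 1 n1).1; have h4 := (ft (-1) nm1).1.
rewrite !mulr1 !mulrN1 in h1 h2 h3 h4.
move=> s t s1 t1 hst.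
have K := key_ineq A B Cc D s b (ltW b0) (ltW b1) s1 h1 h2 h3 h4.
have -> : H4 A (b * B) (b * Cc) D s t = (A + b * B * s) + (b * Cc + D * s) * t by rewrite /H4; ring.
case: (boolP (`|s| < 1)) => hs.
  apply: lin_closed_nz => //; apply: sq_lt; rewrite -subr_gt0.
  apply: lt_le_trans K; apply: mulr_gt0 => //.
  by rewrite subr_gt0 lt_sq // fs'.
rewrite (negPf hs) /= in hst.
apply: lin_open_nz => //.
  apply: sq_le; rewrite -subr_ge0; apply: le_trans K; apply: mulr_ge0; first exact: ltW.
  by rewrite subr_ge0 le_sq // (fs s s1).1.
apply: lin_closed_nz => //; rewrite normrM.
apply: le_lt_trans hAB; apply: ler_piMl => //; rewrite ger0_norm; exact: ltW.
Qed.
End TwoVar.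
Arguments H4 {C}.

Section Multi.
Variable C : numClosedFieldType.
Variable V : finType.
Notation spin := {ffun V -> bool}.

Definition Zc (c : spin -> C) (x : V -> C) : C :=
  \sum_(sg : spin) c sg * \prod_(v | sg v) x v.

Lemma eq_Zc c x y : (forall v, x v = y v) -> Zc c x = Zc c y.
Proof. by move=> h; apply: eq_bigr => sg _; congr (_ * _); apply: eq_bigr. Qed.

Definition upd2 (x : V -> C) (a b : V) (s t : C) : V -> C :=
  fun v => if v == a then s else if v == b then t else x v.

Lemma upd2_id x a b v : upd2 x a b (x a) (x b) v = x v.
Proof. by rewrite /upd2; case: eqP => [->|_] //; case: eqP => [->|]. Qed.

Section Pair.
Variables (a b : V).
Hypothesis ab : a != b.

Definition Mp (x : V -> C) (sg : spin) := \prod_(v | (v != a) && (v != b) && sg v) x v.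

Definition Cf (c : spin -> C) x (p q : bool) :=
  \sum_(sg : spin | (sg a == p) && (sg b == q)) c sg * Mp x sg.

Lemma prod_upd2 x s t (sg : spin) :
  \prod_(v | sg v) upd2 x a b s t v =
  (if sg a then s else 1) * (if sg b then t else 1) * Mp x sg.
Proof.
rewrite big_mkcond (bigD1 a) //= (bigD1 b) /=; last by rewrite eq_sym.
rewrite /upd2 eqxx eq_sym (negPf ab) eqxx mulrA.
congr (_ * _ * _).
rewrite /Mp [RHS]big_mkcondr; apply: eq_bigr => v /andP[/negPf -> /negPf ->] //.
Qed.

Lemma decomp_class c (k : bool -> bool -> C) x s t p q :
  \sum_(sg : spin | (sg a == p) && (sg b == q)) c sg * k (sg a) (sg b) * \prod_(v | sg v) upd2 x a b s t v =
  k p q * Cf c x p q * (if p then s else 1) * (if q then t else 1).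
Proof.
rewrite /Cf mulr_sumr !mulr_suml; apply: eq_bigr => sg /andP[/eqP ea /eqP eb].
by rewrite prod_upd2 ea eb; ring.
Qed.

Lemma decomp c (k : bool -> bool -> C) x s t :
  \sum_(sg : spin) c sg * k (sg a) (sg b) * \prod_(v | sg v) upd2 x a b s t v =
  k false false * Cf c x false false + k true false * Cf c x true false * s +
  k false true * Cf c x false true * t + k true true * Cf c x true true * s * t.
Proof.
rewrite (bigID (fun sg : spin => sg a)) /=.
rewrite [X in X + _](bigID (fun sg : spin => sg b)) [X in _ + X](bigID (fun sg : spin => sg b)) /=.
have E (p q : bool) (P : pred spin) : (forall sg : spin, P sg = (sg a == p) && (sg b == q)) ->
  \sum_(sg : spin | P sg) c sg * k (sg a) (sg b) * \prod_(v | sg v) upd2 x a b s t v =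
  k p q * Cf c x p q * (if p then s else 1) * (if q then t else 1).
  by move=> hP; rewrite -decomp_class; apply: eq_bigl => sg; rewrite hP.
rewrite (E true true (fun sg => sg a && sg b)) ?(E true false (fun sg => sg a && ~~ sg b)).
rewrite (E false true (fun sg => ~~ sg a && sg b)) ?(E false false (fun sg => ~~ sg a && ~~ sg b)) /=.
- by rewrite !mulr1; ring.
all: by move=> sg; case: (sg a); case: (sg b).
Qed.
End Pair.

Definition kb (b : C) (p q : bool) : C := if p != q then b else 1.

Lemma Z_upd2 a b (ab : a != b) c (k : bool -> bool -> C) x s t :
  Zc (fun sg => c sg * k (sg a) (sg b)) (upd2 x a b s t) =
  k false false * Cf a b c x false false + k true false * Cf a b c x true false * s +
  k false true * Cf a b c x false true * t + k true true * Cf a b c x true true * s * t.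
Proof. exact: decomp. Qed.

Lemma Z1_upd2 a b (ab : a != b) c x s t :
  Zc c (upd2 x a b s t) =
  H4 (Cf a b c x false false) (Cf a b c x true false) (Cf a b c x false true) (Cf a b c x true true) s t.
Proof.
have -> : Zc c (upd2 x a b s t) = Zc (fun sg => c sg * (fun _ _ => 1) (sg a) (sg b)) (upd2 x a b s t).
  by apply: eq_bigr => sg _; rewrite mulr1.
by rewrite (Z_upd2 a b ab c (fun _ _ => 1)) /H4 !mul1r.
Qed.

Lemma Zb_upd2 a b (ab : a != b) c (be : C) x s t :
  Zc (fun sg => c sg * kb be (sg a) (sg b)) (upd2 x a b s t) =
  H4 (Cf a b c x false false) (be * Cf a b c x true false) (be * Cf a b c x false true) (Cf a b c x true true) s t.
Proof. by rewrite (Z_upd2 a b ab c (kb be)) /kb /= /H4 !mul1r. Qed.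

Lemma Zc_upd2_self c x a b : Zc c x = Zc c (upd2 x a b (x a) (x b)).
Proof. by apply: eq_Zc => v; rewrite upd2_id. Qed.

Definition NZ (c : spin -> C) (S : {set V}) := forall x : V -> C,
  (forall v, `|x v| <= 1) -> (exists2 u, u \in S & `|x u| < 1) ->
  (forall v, v \notin S -> `|x v| < 1) -> Zc c x != 0.

Lemma upd2_le1 x a b s t : (forall v, `|x v| <= 1) -> `|s| <= 1 -> `|t| <= 1 ->
  forall v, `|upd2 x a b s t v| <= 1.
Proof. by move=> hx hs ht v; rewrite /upd2; case: ifP => _ //; case: ifP. Qed.

Lemma upd2_other x a b s t v : v != a -> v != b -> upd2 x a b s t v = x v.
Proof. by move=> /negPf va /negPf vb; rewrite /upd2 va vb. Qed.

Lemma upd2_a x a b s t : upd2 x a b s t a = s.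
Proof. by rewrite /upd2 eqxx. Qed.

Lemma upd2_b x a b s t : a != b -> upd2 x a b s t b = t.
Proof. by move=> ab; rewrite /upd2 eq_sym (negPf ab) eqxx. Qed.

Lemma stepIn (be : C) (b0 : 0 < be) (b1 : be < 1) a b (ab : a != b) (S : {set V}) c :
  a \in S -> b \in S -> NZ c S -> NZ (fun sg => c sg * kb be (sg a) (sg b)) S.
Proof.
move=> aS bS hNZ x hx [u uS ux] hout.
rewrite (Zc_upd2_self _ _ a b) Zb_upd2 //.
have hout' s t v : v \notin S -> `|upd2 x a b s t v| < 1.
  move=> vS; rewrite upd2_other ?hout //; apply/eqP => e; move: vS; rewrite e ?aS ?bS.
  by []. by [].
case: (boolP [exists u, (u \in S) && (u != a) && (u != b) && (`|x u| < 1)]).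
  move/existsP => [u' /andP[/andP[/andP[u'S u'a] u'b] u'x]].
  apply: (@L1 _ _ _ _ _ be b0 b1); [|exact: hx|exact: hx].
  move=> s t s1 t1; rewrite -Z1_upd2 //; apply: hNZ; first exact: upd2_le1.
    by exists u' => //; rewrite upd2_other.
  exact: hout'.
move=> hno.
have hab : (`|x a| < 1) || (`|x b| < 1).
  have [ua|ua] := eqVneq u a; first by rewrite -ua ux.
  have [ub|ub] := eqVneq u b; first by rewrite -ub ux orbT.
  by move: hno; rewrite negb_exists => /forallP /(_ u); rewrite uS ua ub ux.
apply: (@L4 _ _ _ _ _ be b0 b1) => //; try by apply: hx.
move=> s t s1 t1 hst; rewrite -Z1_upd2 //; apply: hNZ; first exact: upd2_le1.
  case/orP: hst => h; [exists a | exists b] => //.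
    by rewrite upd2_a.
  by rewrite upd2_b.
exact: hout'.
Qed.

Definition flip (b : V) (sg : spin) : spin := [ffun v => if v == b then ~~ sg v else sg v].

Lemma flipK b : involutive (flip b).
Proof. by move=> sg; apply/ffunP => v; rewrite !ffunE; case: eqP => // _; rewrite negbK. Qed.

Lemma Cf_flip {a b} (ab : a != b) c x p q : (forall sg, c (flip b sg) = c sg) ->
  Cf a b c x p (~~ q) = Cf a b c x p q.
Proof.
move=> hc; rewrite /Cf (reindex_inj (inv_inj (flipK b))) /=.
apply: eq_big => sg.
  by rewrite !ffunE (negPf ab) eqxx; case: (sg b); case: q.
move=> _; rewrite hc /Mp; congr (_ * _); apply: eq_bigl => v.
by rewrite ffunE; case: (eqVneq v b) => [->|]; rewrite ?eqxx ?andbF.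
Qed.

Lemma stepOut (be : C) (b0 : 0 < be) (b1 : be < 1) a b (ab : a != b) (S : {set V}) c :
  a \in S -> b \notin S -> (forall sg, c (flip b sg) = c sg) ->
  NZ c S -> NZ (fun sg => c sg * kb be (sg a) (sg b)) (b |: S).
Proof.
move=> aS bS hc hNZ x hx [u uS ux] hout.
rewrite (Zc_upd2_self _ _ a b) Zb_upd2 //.
have e1 := Cf_flip ab c x false false hc; have e2 := Cf_flip ab c x true false hc.
rewrite /= in e1 e2; rewrite e1 e2.
set A := Cf a b c x false false; set B := Cf a b c x true false.
have base s t : `|s| <= 1 -> `|t| < 1 -> (exists2 u, u \in S & `|upd2 x a b s t u| < 1) ->
    A + B * s != 0.
  move=> s1 t1 hu.
  have : Zc c (upd2 x a b s 0) != 0.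
    apply: hNZ; first by apply: upd2_le1; rewrite ?normr0 ?ler01.
      case: hu => w wS wx.
      have wb : w != b by apply/eqP => e; move: bS; rewrite -e wS.
      have [wa|wa] := eqVneq w a.
        by exists a; rewrite // upd2_a; move: wx; rewrite wa upd2_a.
      by exists w; rewrite // upd2_other //; move: wx; rewrite upd2_other.
    move=> v vS; rewrite /upd2; case: ifP => [/eqP va|_]; first by move: vS; rewrite va aS.
    case: ifP => [_|/negbT vb]; first by rewrite normr0 ltr01.
    by apply: hout; rewrite !inE negb_or vb.
  by rewrite Z1_upd2 // e1 e2 /H4 -/A -/B !mulr0 !addr0.
rewrite /H4.
case: (boolP [exists u, (u \in S) && (u != a) && (`|x u| < 1)]).
  move/existsP => [u' /andP[/andP[u'S u'a] u'x]].
  apply: LP1 => //; try exact: ltW; try exact: hx.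
  apply: lin_closed => s s1; apply: (base s 0) => //; first by rewrite normr0 ltr01.
  by exists u' => //; rewrite upd2_other //; apply/eqP => e; move: bS; rewrite -e u'S.
move=> hno.
have hab : (`|x a| < 1) || (`|x b| < 1).
  have [ua|ua] := eqVneq u a; first by rewrite -ua ux.
  have [ub|ub] := eqVneq u b; first by rewrite -ub ux orbT.
  move: uS; rewrite !inE (negPf ub) /= => uS.
  by move: hno; rewrite negb_exists => /forallP /(_ u); rewrite uS ua ux.
have [hB hA] : `|B| <= `|A| /\ A != 0.
  apply: lin_open => s s1; apply: (base s 0) => //; first exact: ltW.
    by rewrite normr0 ltr01.
  by exists a => //; rewrite upd2_a.
by apply: LP2 => //; try exact: ltW; exact: hx.
Qed.
End Multi.
Arguments kb {C}.
Arguments NZ {C V}.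
Arguments Zc {C V}.
Arguments Cf {C V}.
Arguments flip {V}.
Arguments upd2 {C V}.
Arguments Mp {C V}.

Section Ising.
Variables (C : numClosedFieldType) (V E : finType) (ends : E -> V * V).
Notation spin := {ffun V -> bool}.
Variable be : C.
Hypotheses (b0 : 0 < be) (b1 : be < 1).

Definition cut (e : E) (sg : spin) := sg (ends e).1 != sg (ends e).2.
Definition cF (F : {set E}) (sg : spin) : C := be ^+ #|[set e in F | cut e sg]|.

Lemma cF_add (F : {set E}) (e : E) (sg : spin) : e \notin F ->
  cF (e |: F) sg = cF F sg * kb be (sg (ends e).1) (sg (ends e).2).
Proof.
move=> eF; rewrite /cF /kb -/(cut e sg); case h: (cut e sg).
  have -> : [set e' in e |: F | cut e' sg] = e |: [set e' in F | cut e' sg].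
    by apply/setP => e'; rewrite !inE; case: eqP => [->|] /=; rewrite ?h ?andbT ?andbF.
  by rewrite cardsU1 inE (negPf eF) /= exprS mulrC.
have -> : [set e' in e |: F | cut e' sg] = [set e' in F | cut e' sg].
  by apply/setP => e'; rewrite !inE; case: eqP => [->|] /=; rewrite ?h ?andbT ?andbF.
by rewrite mulr1.
Qed.

Lemma cF_flip (F : {set E}) (b : V) (sg : spin) : (forall e, e \in F -> ((ends e).1 != b) && ((ends e).2 != b)) ->
  cF F (flip b sg) = cF F sg.
Proof.
move=> hF; rewrite /cF; suff -> : [set e in F | cut e (flip b sg)] = [set e in F | cut e sg] by [].
apply/setP => e; rewrite !inE.
case eF: (e \in F) => //=; move/andP: (hF e eF) => [h1 h2].
by rewrite /cut !ffunE (negPf h1) (negPf h2).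
Qed.

Lemma NZ_ext (c cc : spin -> C) (S : {set V}) : (forall sg, c sg = cc sg) -> NZ c S -> NZ cc S.
Proof.
move=> h hN x h1 h2 h3; have := hN x h1 h2 h3.
by congr (_ != 0); apply: eq_bigr => sg _; rewrite h.
Qed.

Lemma Z0_prod (x : V -> C) : Zc (fun _ => 1) x = \prod_v (1 + x v).
Proof.
rewrite [RHS](eq_bigr (fun v => \sum_(j : bool) (if j then x v else 1))); last first.
  by move=> v _; rewrite big_bool /= addrC.
rewrite bigA_distr_bigA /Zc; apply: eq_bigr => sg _; rewrite mul1r [LHS]big_mkcond.
by [].
Qed.

Definition adjE := fun u v : V => [exists e : E, (ends e == (u, v)) || (ends e == (v, u))].

Definition invF (F : {set E}) (S : {set V}) :=
  forall e, e \in F -> ((ends e).1 \in S) && ((ends e).2 \in S).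

Lemma finish (conn : forall u v, connect adjE u v) (F : {set E}) (S : {set V}) :
  (forall e, e \notin F -> ((ends e).1 \notin S) && ((ends e).2 \notin S)) ->
  invF F S -> S != set0 -> F = setT /\ S = setT.
Proof.
move=> hno hinv /set0Pn [s0 s0S].
have cl : closed adjE (mem S).
  move=> u v /existsP [e he].
  case eF: (e \in F).
    move/andP: (hinv e eF) => [h1 h2].
    by case/orP: he => /eqP ee; rewrite ee /= in h1 h2; rewrite /= h1 h2.
  move/negbT/hno/andP: eF => [h1 h2].
  by case/orP: he => /eqP ee; rewrite ee /= in h1 h2; rewrite /= (negPf h1) (negPf h2).
have HS : S = setT.
  by apply/setP => v; rewrite inE -(closed_connect cl (conn s0 v)).
split=> //; apply/setP => e; rewrite inE; apply/negPn/negP => eF.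
by move/andP: (hno e eF) => [+ _]; rewrite HS inE.
Qed.

Lemma card_lt (F : {set E}) (e : E) : e \notin F -> (#|~: (e |: F)| < #|~: F|)%N.
Proof.
move=> eF; apply: proper_card; rewrite properC properE subsetUr /=.
by apply/subsetPn; exists e; rewrite ?setU11.
Qed.

Lemma grow (conn : forall u v, connect adjE u v) n : forall F S, (#|~: F| <= n)%N ->
  invF F S -> S != set0 -> NZ (cF F) S -> NZ (cF setT) setT.
Proof.
elim: n => [|n IH] F S hn hinv hS hNZ;
  case: (pickP (fun e => (e \notin F) && (((ends e).1 \in S) || ((ends e).2 \in S)))) => [e /andP[eF he] | none].
- by move: hn; rewrite leqn0 => /eqP/cards0_eq/setP/(_ e); rewrite !inE eF.
- have hno : forall e, e \notin F -> ((ends e).1 \notin S) && ((ends e).2 \notin S).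
    by move=> e eF; have := none e; rewrite /= eF /= => /negbT; rewrite negb_or.
  by have [eF eS] := finish conn F S hno hinv hS; rewrite eF eS in hNZ.
- have hn' : (#|~: (e |: F)| <= n)%N by rewrite -ltnS; apply: leq_trans hn; apply: card_lt.
  set a := (ends e).1 in he *; set b := (ends e).2 in he *.
  have inv1 : forall S' : {set V}, S \subset S' -> a \in S' -> b \in S' -> invF (e |: F) S'.
    move=> S' sS aS' bS' e'; rewrite !inE; case: eqP => [->|_ /= e'F]; first by rewrite aS' bS'.
    by move/andP: (hinv e' e'F) => [h1 h2]; rewrite !(subsetP sS).
  have [ab|ab] := eqVneq a b.
    have aS : a \in S by move: he; rewrite ab orbb.
    apply: (IH (e |: F) S hn' _ hS); first by apply: inv1; rewrite ?subxx // -ab.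
    apply: NZ_ext hNZ => sg; rewrite cF_add // -/a -/b ab /kb eqxx mulr1 //.
  case aS: (a \in S); case bS: (b \in S).
  + apply: (IH (e |: F) S hn' _ hS); first exact: inv1.
    apply: NZ_ext (@stepIn _ _ be b0 b1 a b ab S (cF F) aS bS hNZ) => sg.
    by rewrite cF_add.
  + have hc : forall sg, cF F (flip b sg) = cF F sg.
      move=> sg; apply: cF_flip => e' e'F; move/andP: (hinv e' e'F) => [h1 h2].
      by apply/andP; split; apply/eqP => eb; move: bS; rewrite -eb ?h1 ?h2.
    apply: (IH (e |: F) (b |: S) hn').
    * by apply: inv1; rewrite ?subsetUr // !inE ?aS ?eqxx ?orbT.
    * by apply/set0Pn; exists b; rewrite setU11.
    apply: NZ_ext (@stepOut _ _ be b0 b1 a b ab S (cF F) aS (negbT bS) hc hNZ) => sg.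
    by rewrite cF_add.
  + have hc : forall sg, cF F (flip a sg) = cF F sg.
      move=> sg; apply: cF_flip => e' e'F; move/andP: (hinv e' e'F) => [h1 h2].
      by apply/andP; split; apply/eqP => eb; move: aS; rewrite -eb ?h1 ?h2.
    have ba : b != a by rewrite eq_sym.
    apply: (IH (e |: F) (a |: S) hn').
    * by apply: inv1; rewrite ?subsetUr // !inE ?bS ?eqxx ?orbT.
    * by apply/set0Pn; exists a; rewrite setU11.
    apply: NZ_ext (@stepOut _ _ be b0 b1 b a ba S (cF F) bS (negbT aS) hc hNZ) => sg.
    by rewrite cF_add // /kb eq_sym.
  + by move: he; rewrite aS bS.
- have hno : forall e, e \notin F -> ((ends e).1 \notin S) && ((ends e).2 \notin S).
    by move=> e eF; have := none e; rewrite /= eF /= => /negbT; rewrite negb_or.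
  by have [eF eS] := finish conn F S hno hinv hS; rewrite eF eS in hNZ.
Qed.

Lemma IL (conn : forall u v, connect adjE u v) (x : V -> C) :
  (forall v, `|x v| <= 1) -> (exists u, `|x u| < 1) -> Zc (cF setT) x != 0.
Proof.
move=> hx [u ux].
have base : NZ (cF set0) [set u].
  apply: (@NZ_ext (fun _ => 1)) => [sg|]; first by rewrite /cF (_ : [set e in set0 | _] = set0) ?cards0 //; apply/setP => e; rewrite !inE.
  move=> y _ [w] wu wy hout; rewrite Z0_prod prodf_seq_neq0; apply/allP => v _ /=.
  have yv : `|y v| < 1.
    case: (boolP (v \in [set u])) => [vu|/hout //].
    by move: wu vu; rewrite !inE => /eqP wu /eqP vu; rewrite vu -wu.
  by rewrite -(mul1r (y v)); apply: lin_open_nz; rewrite ?normr1 ?oner_neq0.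
apply: (@grow conn _ set0 [set u] (leqnn _) _ _ base) => //.
- by move=> e; rewrite in_set0.
- by apply/set0Pn; exists u; rewrite inE.
- by exists u; rewrite ?inE.
- by move=> v; rewrite inE.
Qed.
End Ising.
Arguments adjE {V E}.
Arguments cut {V E}.
Arguments cF {C V E}.

Section GL.
Variable C : numClosedFieldType.

Lemma conjV (x : C) : (x^-1)^* = (x^*)^-1.
Proof. exact: fmorphV. Qed.

Lemma GL_term (r : C) : `|r| <= 1 -> r != 1 ->
  1 <= (1 - r)^-1 + ((1 - r)^-1)^*.
Proof.
move=> r1 rn1.
have d0 : 1 - r != 0 by rewrite subr_eq0 eq_sym.
have d0' : 1 - r^* != 0 by rewrite -conjC1 -rmorphB conjC_eq0.
have e : (1 - r)^-1 + ((1 - r)^-1)^* - 1 = (1 - `|r| ^+ 2) / `|1 - r| ^+ 2.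
  rewrite conjV !normCK !(rmorphB, rmorph1); field.
  by apply/andP; split.
by rewrite -subr_ge0 e divr_ge0 // ?exprn_ge0 // subr_ge0 expr_le1.
Qed.

Lemma GL_deriv (rs : seq C) : all (fun r => r != 1) rs ->
  (\prod_(r <- rs) ('X - r%:P))^`().[1] =
  (\prod_(r <- rs) ('X - r%:P)).[1] * \sum_(r <- rs) (1 - r)^-1.
Proof.
elim: rs => [|r rs IH] /=; first by rewrite !big_nil mulr0 -polyC1 derivC horner0.
case/andP => rn1 /IH {}IH.
rewrite !big_cons derivM hornerD !hornerM IH derivXsubC hornerE hornerXsubC.
have d0 : 1 - r != 0 by rewrite subr_eq0 eq_sym.
by field.
Qed.

Lemma GL_nz (rs : seq C) : rs != [::] -> all (fun r => (`|r| <= 1) && (r != 1)) rs ->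
  (\prod_(r <- rs) ('X - r%:P))^`().[1] != 0.
Proof.
move=> rs0 hrs.
have hn1 : all (fun r => r != 1) rs by apply/allP => r /(allP hrs) /andP[].
rewrite GL_deriv // mulf_neq0 //.
  rewrite horner_prod prodf_seq_neq0; apply/allP => r /(allP hn1) /= rn1.
  by rewrite hornerXsubC subr_eq0 eq_sym.
set S := \sum_(r <- rs) _.
have : (size rs)%:R <= S + S^*.
  rewrite /S rmorph_sum -big_split /= -sum1_size natr_sum.
  rewrite [X in X <= _]big_seq [X in _ <= X]big_seq.
  by apply: ler_sum => r /(allP hrs) /andP[r1 rn1]; apply: GL_term.
apply: contraTneq => ->; rewrite rmorph0 addr0.
by case: rs rs0 {hrs hn1 S} => //= r rs _; rewrite real_leNgt ?realn ?rpred0 // ltr0Sn.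
Qed.

Lemma bound_horner (r : {poly C}) (t : C) : `|t| <= 2 ->
  `|r.[t]| <= \sum_(i < size r) `|r`_i| * 2 ^+ i.
Proof.
move=> t2; rewrite horner_coef; apply: le_trans (ler_norm_sum _ _ _) _.
apply: ler_sum => i _; rewrite normrM normrX; apply: ler_wpM2l => //.
by apply: lerXn2r; rewrite // qualifE /= ?ler0n.
Qed.

Lemma lip (q : {poly C}) : exists K, 0 <= K /\
  forall t, `|t| <= 2 -> `|q.[t] - q.[1]| <= K * `|t - 1|.
Proof.
have : root (q - q.[1]%:P) 1 by rewrite /root hornerD hornerN hornerC subrr.
case/factor_theorem => r hr.
exists (\sum_(i < size r) `|r`_i| * 2 ^+ i); split.
  by apply: sumr_ge0 => i _; rewrite mulr_ge0 ?exprn_ge0 ?ler0n.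
move=> t t2; have := congr1 (horner^~ t) hr.
rewrite hornerD hornerN hornerC hornerM hornerXsubC => ->.
by rewrite normrM ler_wpM2r ?bound_horner.
Qed.

Lemma cjM (a b : C) : (a * b)^* = a^* * b^*. Proof. exact: rmorphM. Qed.
Lemma cjN (a : C) : (- a)^* = - a^*. Proof. exact: rmorphN. Qed.
Lemma cjD (a b : C) : (a + b)^* = a^* + b^*. Proof. exact: rmorphD. Qed.
End GL.
Arguments lip {C}.
Arguments cjM {C}.
Arguments cjN {C}.
Arguments cjD {C}.
Arguments GL_nz {C}.

Section Main.
Variables (C : numClosedFieldType) (V E : finType) (ends : E -> V * V).
Notation spin := {ffun V -> bool}.
Variable be : C.
Hypotheses (b0 : 0 < be) (b1 : be < 1).
Hypothesis conn : forall u v, connect (adjE ends) u v.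

Definition cfT := cF ends be setT.

Definition negf (sg : spin) : spin := [ffun v => ~~ sg v].

Lemma negfK : involutive negf.
Proof. by move=> sg; apply/ffunP => v; rewrite !ffunE negbK. Qed.

Lemma cfT_neg sg : cfT (negf sg) = cfT sg.
Proof.
rewrite /cfT /cF; suff -> : [set e in setT | cut ends e (negf sg)] = [set e in setT | cut ends e sg] by [].
by apply/setP => e; rewrite !inE /cut !ffunE; case: (sg _); case: (sg _).
Qed.

Lemma Zc_sym (x : V -> C) : (forall v, x v != 0) ->
  Zc cfT x = (\prod_v x v) * Zc cfT (fun v => (x v)^-1).
Proof.
move=> hx; rewrite /Zc mulr_sumr (reindex_inj (inv_inj negfK)) /=.
apply: eq_bigr => sg _; rewrite cfT_neg mulrCA; congr (_ * _).
rewrite [in RHS](bigID (fun v => sg v)) /= [X in X * _]mulrC -mulrA -big_split /=.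
rewrite [X in _ * X]big1 ?mulr1; last by move=> v _; rewrite divff.
by apply: eq_bigl => v; rewrite ffunE.
Qed.

Lemma OL (x : V -> C) : (forall v, 1 <= `|x v|) -> (exists u, 1 < `|x u|) -> Zc cfT x != 0.
Proof.
move=> hx [u ux].
have nz v : x v != 0 by rewrite -normr_gt0; apply: lt_le_trans (hx v).
rewrite Zc_sym // mulf_neq0 //; first by apply/prodf_neq0 => v _.
apply: (@IL C V E ends be b0 b1 conn).
  by move=> v; rewrite normfV invr_le1 ?normr_gt0 // unitfE normr_eq0.
exists u; rewrite normfV invf_lt1 //; exact: lt_trans ltr01 ux.
Qed.

Variable w : V -> nat.
Hypothesis hw : forall v, (0 < w v)%N.

Definition wsum (sg : spin) : nat := (\sum_(u | sg u) w u)%N.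

Definition PP (x : V -> C) : {poly C} :=
  \sum_(sg : spin) (cfT sg * \prod_(u | sg u) x u) *: 'X^(wsum sg).

Lemma hornerPP x t : (PP x).[t] = Zc cfT (fun u => t ^+ w u * x u).
Proof.
rewrite /PP horner_sum /Zc; apply: eq_bigr => sg _.
by rewrite hornerZ hornerXn big_split /= prodrXr /wsum; ring.
Qed.

Lemma PP_ext x x' : (forall u, x u = x' u) -> PP x = PP x'.
Proof. by move=> h; apply: eq_bigr => sg _; congr (_ *: _); congr (_ * _); apply: eq_bigr. Qed.

Definition full : spin := [ffun _ => true].

Lemma wsum_full sg : (wsum sg == wsum full) = (sg == full).
Proof.
apply/eqP/eqP => [h|->] //; apply/ffunP => v; rewrite ffunE.
apply/negPn/negP => hv; move: h.
rewrite /wsum [in RHS](bigID (fun u => sg u)) /=.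
have -> : \sum_(i | full i && sg i) w i = \sum_(i | sg i) w i.
  by apply: eq_bigl => u; rewrite ffunE.
move/eqP; rewrite -{1}[X in X == _]addn0 eqn_add2l eq_sym; apply/negP; rewrite -lt0n.
rewrite (bigD1 v) /=; last by rewrite ffunE.
exact: leq_trans (hw v) (leq_addr _ _).
Qed.

Lemma cfT_full : cfT full = 1.
Proof.
rewrite /cfT /cF (_ : [set e in setT | cut ends e full] = set0) ?cards0 //.
by apply/setP => e; rewrite !inE /cut !ffunE.
Qed.

Lemma coef_PP_full x : (PP x)`_(wsum full) = \prod_u x u.
Proof.
rewrite /PP coef_sumMXn (big_pred1 full) ?cfT_full ?mul1r.
  by apply: eq_bigl => u; rewrite ffunE.
by move=> sg; rewrite /= wsum_full.
Qed.

Lemma wsum_full_gt0 : (0 < #|V|)%N -> (0 < wsum full)%N.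
Proof.
move=> /card_gt0P [v _]; rewrite /wsum (bigD1 v) /=; last by rewrite ffunE.
exact: leq_trans (hw v) (leq_addr _ _).
Qed.

Lemma case1 (y : V -> C) : (0 < #|V|)%N -> (forall v, 1 <= `|y v|) ->
  (PP y).[1] != 0 -> (PP y)^`().[1] != 0.
Proof.
move=> hV hy g1.
have [u _] : exists u : V, true by case/card_gt0P: hV => u; exists u.
have g0 : PP y != 0 by apply: contraNneq g1 => ->; rewrite horner0.
have [rs Hg] := closed_field_poly_normal (PP y).
have lc0 : lead_coef (PP y) != 0 by rewrite lead_coef_eq0.
have hroot r : r \in rs -> (PP y).[r] = 0.
  by move=> hr; rewrite Hg hornerZ; apply/eqP; rewrite mulf_eq0 -/(root _ r) root_prod_XsubC hr orbT.
have hrs : all (fun r => (`|r| <= 1) && (r != 1)) rs.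
  apply/allP => r hr; apply/andP; split.
    rewrite real_leNgt ?normr_real ?realE ?ler01 //; apply/negP => r1.
    have := hroot r hr; apply/eqP; rewrite hornerPP; apply: OL.
      move=> v; rewrite normrM normrX -[1]mulr1 ler_pM ?ler01 //.
      by rewrite exprn_ege1 // ltW.
    exists u; rewrite normrM normrX; apply: lt_le_trans (_ : `|r| ^+ w u <= _).
      by rewrite exprn_egt1 // -lt0n hw.
    by rewrite ler_pMr ?exprn_gt0 ?(lt_trans ltr01).
  by apply: contraNneq g1 => <-; rewrite hroot.
have rs0 : rs != [::].
  apply/eqP => rsn; move: Hg; rewrite rsn big_nil => Hg.
  have : (PP y)`_(wsum full) != 0.
    by rewrite coef_PP_full; apply/prodf_neq0 => v _; rewrite -normr_gt0 (lt_le_trans ltr01).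
  by rewrite Hg alg_polyC coefC; have := wsum_full_gt0 hV; rewrite lt0n => /negPf ->; rewrite eqxx.
by rewrite Hg derivZ hornerZ mulf_neq0 // GL_nz.
Qed.

Definition Ap (y : V -> C) (v0 : V) : {poly C} :=
  \sum_(sg : spin | ~~ sg v0) (cfT sg * \prod_(u | sg u) y u) *: 'X^(wsum sg).
Definition Bp (y : V -> C) (v0 : V) : {poly C} :=
  \sum_(sg : spin | sg v0) (cfT sg * \prod_(u | sg u && (u != v0)) y u) *: 'X^(wsum sg).

Lemma PP_split y v0 s : PP (fun u => if u == v0 then s else y u) = Ap y v0 + s *: Bp y v0.
Proof.
rewrite /PP (bigID (fun sg : spin => sg v0)) /= addrC scaler_sumr; congr (_ + _).
  apply: eq_bigr => sg hs; congr (_ *: _); congr (_ * _); apply: eq_bigr => u hu.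
  by case: eqP => // e; move: hs; rewrite -e hu.
apply: eq_bigr => sg hs; rewrite scalerA; congr (_ *: _).
rewrite (bigD1 v0) //= eqxx mulrCA; congr (_ * (_ * _)).
by apply: eq_bigr => u /andP[_ /negPf ->].
Qed.

Lemma case2 (y : V -> C) (v0 : V) : (forall v, 1 <= `|y v|) ->
  (PP y).[1] = 0 -> (PP y)^`().[1] != 0.
Proof.
move=> hy g1; apply/negP => /eqP d1.
have hy1 : `|y v0| = 1.
  have := hy v0; rewrite le_eqVlt => /orP[/eqP <- //|hlt].
  have : (PP y).[1] != 0.
    rewrite hornerPP; apply: OL; first by move=> v; rewrite expr1n mul1r.
    by exists v0; rewrite expr1n mul1r.
  by rewrite g1 eqxx.
have y0 : y v0 != 0 by rewrite -normr_eq0 hy1 oner_neq0.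
have ycj : (y v0)^* = (y v0)^-1.
  by apply: (mulfI y0); rewrite -normCK hy1 expr1n divff.
set A := Ap y v0; set B := Bp y v0.
have gAB : PP y = A + y v0 *: B.
  by rewrite -PP_split; apply: PP_ext => u; case: eqP => // ->.
have hev s t : (A + s *: B).[t] = Zc cfT (fun u => t ^+ w u * (if u == v0 then s else y u)).
  by rewrite -PP_split hornerPP.
set a1 := A.[1]; set bb := B.[1].
have e1 : a1 = - (y v0 * bb).
  by apply/eqP; rewrite -addr_eq0; move: g1; rewrite gAB hornerD hornerZ => ->.
have bb0 : bb != 0.
  apply/negP => /eqP bb0.
  have : (A + 2 *: B).[1] != 0.
    rewrite hev; apply: OL.
      by move=> v; rewrite expr1n mul1r; case: eqP => _ //; rewrite normr_nat ler1n.
    by exists v0; rewrite expr1n mul1r eqxx normr_nat ltr1n.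
  by rewrite hornerD hornerZ -/a1 -/bb e1 bb0 !mulr0 oppr0 addr0 eqxx.
have d1' : A^`().[1] = - (y v0 * B^`().[1]).
  by apply/eqP; rewrite -addr_eq0; move: d1; rewrite gAB derivD derivZ hornerD hornerZ => ->.
have hcj (p : {poly C}) (t : C) : t^* = t -> (map_poly (@Num.conj C) p).[t] = (p.[t])^*.
  move=> ht; have h : (map_poly (@Num.conj C) p).[t^*] = (p.[t])^* := horner_map (@Num.conj C) p t.
  by rewrite ht in h.
have c1 : (1 : C)^* = 1 by rewrite conjC1.
set n := (2 * w v0)%N.
pose Pt := B * map_poly (@Num.conj C) B - 'X^n * (A * map_poly (@Num.conj C) A).
have Pt1 : Pt.[1] = 0.
  rewrite /Pt hornerD hornerN !hornerM hornerXn expr1n mul1r !hcj // -/a1 -/bb e1.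
  rewrite cjN cjM ycj; field; exact: y0.
have dPt : Pt^`().[1] = - (n%:R * (bb * bb^*)).
  rewrite /Pt derivB !derivM !deriv_map derivXn !(hornerD, hornerN, hornerM, hornerMn, hornerXn) !expr1n !hcj // -/a1 -/bb d1' e1.
  rewrite !cjN !cjM ycj; field; exact: y0.
have [S hS] : exists S, Pt = S * ('X - 1%:P).
  by apply/factor_theorem; rewrite /root Pt1.
have S1 : S.[1] = - (n%:R * (bb * bb^*)).
  rewrite -dPt hS derivM derivXsubC hornerD !hornerM hornerXsubC subrr mulr0 add0r.
  by rewrite hornerC mulr1.
set a := n%:R * (bb * bb^*).
have a0 : 0 < a.
  rewrite mulr_gt0 // ?ltr0n ?muln_gt0 ?hw //.
  by rewrite -normCK exprn_gt0 // normr_gt0.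
have [KS [KS0 hKS]] := lip S.
have [KB [KB0 hKB]] := lip B.
set b := `|bb|.
have bpos : 0 < b by rewrite normr_gt0.
set L := KS / a + KB / b + 1.
have L1 : 1 <= L by rewrite lerDr addr_ge0 // divr_ge0 // ltW.
have L0 : 0 < L by apply: lt_le_trans L1.
set eps := L^-1.
have eps0 : 0 < eps by rewrite invr_gt0.
have eps1 : eps <= 1 by rewrite invf_le1.
have epsS : eps * KS < a.
  rewrite mulrC ltr_pdivrMr //.
  have -> : a * L = KS + (a * (KB / b) + a) by rewrite /L; field; rewrite ?gt_eqF.
  by rewrite ltrDl ltr_wpDl // mulr_ge0 ?divr_ge0 // ltW.
have epsB : eps * KB < b.
  rewrite mulrC ltr_pdivrMr //.
  have -> : b * L = KB + (b * (KS / a) + b) by rewrite /L; field; rewrite ?gt_eqF.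
  by rewrite ltrDl ltr_wpDl // mulr_ge0 ?divr_ge0 // ltW.
set t := 1 + eps.
have treal : t^* = t by apply: conj_Creal; rewrite rpredD ?rpred1 // ger0_real // ltW.
have t1 : 1 < t by rewrite ltrDl.
have t0 : 0 < t by apply: lt_trans t1.
have tnorm : `|t| <= 2 by rewrite ger0_norm ?(ltW t0) // -[2]/(1 + 1) lerD2l.
have tm1 : `|t - 1| = eps by rewrite /t addrC addKr ger0_norm // ltW.
have Bt : B.[t] != 0.
  apply/eqP => B0; have := hKB t tnorm; rewrite B0 sub0r normrN tm1 -/b.
  by rewrite real_leNgt ?realE ?normr_ge0 ?mulr_ge0 ?(ltW eps0) // mulrC epsB.
have ineq : `|t ^+ w v0 * A.[t]| <= `|B.[t]|.
  rewrite real_leNgt ?normr_real //; apply/negP => hlt.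
  set s := - A.[t] / B.[t].
  have : (A + s *: B).[t] = 0 by rewrite hornerD hornerZ /s; field.
  rewrite hev; apply/eqP; apply: OL.
    move=> u; case: eqP => [->|_].
      apply: ltW; rewrite /s normrM normf_div normrN mulrA -normrM ltr_pdivlMr ?normr_gt0 //.
      by rewrite mul1r.
    rewrite normrM normrX (ger0_norm (ltW t0)) -[1]mulr1 ler_pM ?ler01 //.
    by rewrite exprn_ege1 // ltW.
  exists v0; rewrite eqxx /s normrM normf_div normrN mulrA -normrM ltr_pdivlMr ?normr_gt0 //.
  by rewrite mul1r.
have Ptt : 0 <= Pt.[t].
  rewrite /Pt hornerD hornerN !hornerM hornerXn !hcj // -normCK.
  have -> : t ^+ n * (A.[t] * (A.[t])^*) = `|t ^+ w v0 * A.[t]| ^+ 2.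
    rewrite normrM normrX (ger0_norm (ltW t0)) exprMn -exprM mulnC normCK.
    by [].
  by rewrite subr_ge0 le_sq.
have St : 0 <= S.[t].
  by move: Ptt; rewrite hS hornerM hornerXsubC -/t (_ : t - 1 = eps) ?pmulr_lge0 // /t addrC addKr.
have := hKS t tnorm; rewrite S1 tm1 opprK.
rewrite ger0_norm; last by rewrite addr_ge0 // ltW.
move=> h; have ha : a <= eps * KS by rewrite mulrC; apply: le_trans h; rewrite lerDr.
by have := le_lt_trans ha epsS; rewrite ltxx.
Qed.
End Main.

Lemma deriv_sumF (R : nzRingType) (I : finType) (F : I -> {poly R}) :
  (\sum_i F i)^`() = \sum_i (F i)^`().
Proof. by rewrite raddf_sum. Qed.

Section Final.
Variables (C : numClosedFieldType) (V E : finType) (ends : E -> V * V).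

Lemma DZw_PP (w : V -> nat) (be : C) (z : V -> C) :
  DZw ends w be z = (PP C V E ends be w (fun v => z v ^+ w v))^`().[1].
Proof.
rewrite /DZw /PP deriv_sumF horner_sum; apply: eq_bigr => sg _.
rewrite derivZ derivXn hornerZ hornerMn hornerXn expr1n /cfT /cF /wsum /dcut.
have -> : [set e in [set: E] | cut ends e sg] = [set e | sg (ends e).1 != sg (ends e).2].
  by apply/setP => e; rewrite !inE.
by rewrite mulr_natr; ring.
Qed.

Lemma main_nz (be : C) (b0 : 0 < be) (b1 : be < 1)
  (conn : forall u v, connect (adjE ends) u v) (w : V -> nat) (hw : forall v, (0 < w v)%N)
  (hV : (0 < #|V|)%N) (z : V -> C) : (forall v, 1 <= `|z v|) -> DZw ends w be z != 0.
Proof.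
move=> hz; rewrite DZw_PP.
set y := fun v => z v ^+ w v.
have hy : forall v, 1 <= `|y v| by move=> v; rewrite /y normrX exprn_ege1.
case: (eqVneq (PP C V E ends be w y).[1] 0) => g1.
  have [v0 _] : exists v0 : V, true by case/card_gt0P: hV => v0; exists v0.
  exact: (@case2 C V E ends be b0 b1 conn w hw y v0 hy g1).
exact: (@case1 C V E ends be b0 b1 conn w hw y hV hy g1).
Qed.
End Final.

Theorem theorem5 (C : numClosedFieldType) (V E : finType) (ends : E -> V * V) :
  connected_graph ends -> WSGLP C ends /\ SGLP C ends.
Proof.
move=> [hV conn]; split.
  move=> w be z hl b0 b1 hz.
  apply: (@main_nz C V E ends be b0 b1 conn w _ hV z hz) => v; exact: (hl v).1.
move=> be z b0 b1 hz.
exact: (@main_nz C V E ends be b0 b1 conn (fun _ => 1%N) (fun _ => isT) hV z hz).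
Qed.
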